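(* Let $\varphi : X \to Y$ be a morphism in $\mathscr{C}$ with kernel $\kappa : K\to X$. Then $\varphi$ is $\{1,3\}$-invertible if and only if $\varphi$ is regular and $\kappa\kappa^{*} : K\to K$ is invertible. In this case, for every $\psi : Y\to X$ with $\varphi\psi\varphi=\varphi$, $$\psi\,[1_X-\kappa^{*}(\kappa\kappa^{*})^{-1}\kappa]$$ is a $\{1,3\}$-inverse of $\varphi$.
   Context: $\mathscr{C}$ is an additive category with an involution $*$: a map on morphisms sending $\varphi : X\to Y$ to $\varphi^* : Y \to X$ such that $(\varphi^* )^*=\varphi$, $(\varphi\psi)^*=\psi^*\varphi^*$ and $(\varphi+\phi)^*=\varphi^*+\phi^*$. Composition is written left to right: for $\varphi : X\to Y$ and $\psi : Y\to Z$, $\varphi\psi : X \to Z$ means ''first $\varphi$, then $\psi$''. A kernel of $\varphi : X\to Y$ is a morphism $\kappa : K\to X$ with $\kappa\varphi=0$ such that every $\alpha : M\to X$ with $\alpha\varphi=0$ factors uniquely as $\alpha=\alpha'\kappa$. $\varphi$ is regular if there is $\chi : Y\to X$ with $\varphi\chi\varphi=\varphi$. A $\{1,3\}$-inverse of $\varphi$ is a morphism $\chi : Y\to X$ with $\varphi\chi\varphi=\varphi$ and $(\varphi\chi)^*=\varphi\chi$. A morphism is invertible if it has a two-sided inverse. *)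

(* Defs.v *)
(* an additive category with involution, built by hand
   (no category-theory library is installed). Composition is written
   left to right: [mcomp f g] means "first f, then g". *)
From HB Require Import structures.
From mathcomp Require Import all_boot all_order all_algebra.
Set Implicit Arguments. Unset Strict Implicit. Unset Printing Implicit Defensive.
Import GRing.Theory.
Local Open Scope ring_scope.

Record AddCatInv := {
  Ob : Type;
  Mor : Ob -> Ob -> zmodType;
  mcomp : forall X Y Z : Ob, Mor X Y -> Mor Y Z -> Mor X Z;
  midm : forall X : Ob, Mor X X;
  compA : forall (W X Y Z : Ob) (f : Mor W X) (g : Mor X Y) (h : Mor Y Z),
      mcomp f (mcomp g h) = mcomp (mcomp f g) h;
  comp1m : forall (X Y : Ob) (f : Mor X Y), mcomp (midm X) f = f;
  compm1 : forall (X Y : Ob) (f : Mor X Y), mcomp f (midm Y) = f;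
  compDl : forall (X Y Z : Ob) (f f' : Mor X Y) (g : Mor Y Z),
      mcomp (f + f') g = mcomp f g + mcomp f' g;
  compDr : forall (X Y Z : Ob) (f : Mor X Y) (g g' : Mor Y Z),
      mcomp f (g + g') = mcomp f g + mcomp f g';
  zero_ob : Ob;
  zero_obP : midm zero_ob = 0;
  biprod : Ob -> Ob -> Ob;
  bi_p1 : forall X Y, Mor (biprod X Y) X;
  bi_p2 : forall X Y, Mor (biprod X Y) Y;
  bi_i1 : forall X Y, Mor X (biprod X Y);
  bi_i2 : forall X Y, Mor Y (biprod X Y);
  bi_i1p1 : forall X Y, mcomp (bi_i1 X Y) (bi_p1 X Y) = midm X;
  bi_i2p2 : forall X Y, mcomp (bi_i2 X Y) (bi_p2 X Y) = midm Y;
  bi_i1p2 : forall X Y, mcomp (bi_i1 X Y) (bi_p2 X Y) = 0;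
  bi_i2p1 : forall X Y, mcomp (bi_i2 X Y) (bi_p1 X Y) = 0;
  bi_sum : forall X Y, mcomp (bi_p1 X Y) (bi_i1 X Y) + mcomp (bi_p2 X Y) (bi_i2 X Y)
                       = midm (biprod X Y);
  mstar : forall X Y : Ob, Mor X Y -> Mor Y X;
  starK : forall (X Y : Ob) (f : Mor X Y), mstar (mstar f) = f;
  star_comp : forall (X Y Z : Ob) (f : Mor X Y) (g : Mor Y Z),
      mstar (mcomp f g) = mcomp (mstar g) (mstar f);
  starD : forall (X Y : Ob) (f g : Mor X Y), mstar (f + g) = mstar f + mstar g
}.

Arguments Mor : clear implicits.
Arguments mcomp {_ X Y Z}.
Arguments midm {_}.
Arguments mstar {_ X Y}.

Section Defs.
Variable C : AddCatInv.

Definition is_kernel (X Y K : Ob C) (phi : Mor C X Y) (kappa : Mor C K X) : Prop :=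
  mcomp kappa phi = 0 /\
  forall (M : Ob C) (alpha : Mor C M X), mcomp alpha phi = 0 ->
    exists! alpha' : Mor C M K, mcomp alpha' kappa = alpha.

Definition regular (X Y : Ob C) (phi : Mor C X Y) : Prop :=
  exists chi : Mor C Y X, mcomp (mcomp phi chi) phi = phi.

Definition inv13 (X Y : Ob C) (phi : Mor C X Y) (chi : Mor C Y X) : Prop :=
  mcomp (mcomp phi chi) phi = phi /\ mstar (mcomp phi chi) = mcomp phi chi.

Definition is_inverse (X Y : Ob C) (f : Mor C X Y) (g : Mor C Y X) : Prop :=
  mcomp f g = midm X /\ mcomp g f = midm Y.

Definition invertible (X Y : Ob C) (f : Mor C X Y) : Prop :=
  exists g : Mor C Y X, is_inverse f g.

End Defs.

(* Main.v *)
Require Import Defs.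
From HB Require Import structures.
From mathcomp Require Import all_boot all_order all_algebra.
Import GRing.Theory.
Local Open Scope ring_scope.

Section H.
Variable C : AddCatInv.

Lemma comp0l (X Y Z : Ob C) (g : Mor C Y Z) : mcomp (0 : Mor C X Y) g = 0.
Proof. by apply: (addrI (mcomp (0 : Mor C X Y) g)); rewrite -compDl !addr0. Qed.
Lemma comp0r (X Y Z : Ob C) (f : Mor C X Y) : mcomp f (0 : Mor C Y Z) = 0.
Proof. by apply: (addrI (mcomp f 0)); rewrite -compDr !addr0. Qed.
Lemma compNl (X Y Z : Ob C) (f : Mor C X Y) (g : Mor C Y Z) : mcomp (- f) g = - mcomp f g.
Proof. by apply: (addrI (mcomp f g)); rewrite -compDl !subrr comp0l. Qed.
Lemma compNr (X Y Z : Ob C) (f : Mor C X Y) (g : Mor C Y Z) : mcomp f (- g) = - mcomp f g.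
Proof. by apply: (addrI (mcomp f g)); rewrite -compDr !subrr comp0r. Qed.
Lemma compBl (X Y Z : Ob C) (f f' : Mor C X Y) (g : Mor C Y Z) :
  mcomp (f - f') g = mcomp f g - mcomp f' g.
Proof. by rewrite compDl compNl. Qed.
Lemma compBr (X Y Z : Ob C) (f : Mor C X Y) (g g' : Mor C Y Z) :
  mcomp f (g - g') = mcomp f g - mcomp f g'.
Proof. by rewrite compDr compNr. Qed.
Lemma star0 (X Y : Ob C) : mstar (0 : Mor C X Y) = 0.
Proof. by apply: (addrI (mstar (0 : Mor C X Y))); rewrite -starD !addr0. Qed.
Lemma starN (X Y : Ob C) (f : Mor C X Y) : mstar (- f) = - mstar f.
Proof. by apply: (addrI (mstar f)); rewrite -starD !subrr star0. Qed.
Lemma starB (X Y : Ob C) (f g : Mor C X Y) : mstar (f - g) = mstar f - mstar g.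
Proof. by rewrite starD starN. Qed.
Lemma star1 (X : Ob C) : mstar (midm X) = midm X.
Proof.
have h : mstar (midm X) = mcomp (mstar (midm X)) (mstar (mstar (midm X))).
  by rewrite starK compm1.
by rewrite h -star_comp compm1 starK.
Qed.
End H.

Lemma part2 (C : AddCatInv) (X Y K : Ob C) (phi : Mor C X Y) (kappa : Mor C K X)
  (hker : is_kernel phi kappa) (u : Mor C K K) :
  is_inverse (mcomp kappa (mstar kappa)) u ->
   forall psi : Mor C Y X, mcomp (mcomp phi psi) phi = phi ->
     inv13 phi (mcomp psi (midm X - mcomp (mcomp (mstar kappa) u) kappa)).
Proof.
case: hker => kphi kfac [ku uk] psi hpsi.
have us : mstar u = u.
  have h1 : mcomp (mstar u) (mcomp kappa (mstar kappa)) = midm K.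
    have sk : mstar (mcomp kappa (mstar kappa)) = mcomp kappa (mstar kappa).
      by rewrite star_comp starK.
    by rewrite -sk -star_comp ku star1.
  by rewrite -(compm1 (mstar u)) -ku Defs.compA h1 comp1m.
have Pphi : mcomp (midm X - mcomp (mcomp (mstar kappa) u) kappa) phi = phi.
  by rewrite compBl comp1m -Defs.compA kphi comp0r subr0.
have [a [ha _]] : exists! a : Mor C X K, mcomp a kappa = midm X - mcomp phi psi.
  by apply: kfac; rewrite compBl comp1m hpsi subrr.
have e : mcomp phi (mcomp psi (midm X - mcomp (mcomp (mstar kappa) u) kappa))
         = midm X - mcomp (mcomp (mstar kappa) u) kappa.
  rewrite Defs.compA.
  have -> : mcomp phi psi = midm X - mcomp a kappa by rewrite ha opprB addrC subrK.
  rewrite compBl comp1m compBr compm1.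
  rewrite !Defs.compA -(Defs.compA a kappa (mstar kappa)) -(Defs.compA a _ u) ku compm1.
  by rewrite subrr subr0.
split; first by rewrite e Pphi.
by rewrite e starB star1 !star_comp starK us Defs.compA.
Qed.

Theorem lemma3p1 (C : AddCatInv) (X Y K : Ob C) (phi : Mor C X Y) (kappa : Mor C K X)
  (hker : is_kernel phi kappa) :
  ((exists chi : Mor C Y X, inv13 phi chi) <->
     (regular phi /\ invertible (mcomp kappa (mstar kappa)))) /\
  (forall (u : Mor C K K), is_inverse (mcomp kappa (mstar kappa)) u ->
   forall psi : Mor C Y X, mcomp (mcomp phi psi) phi = phi ->
     inv13 phi (mcomp psi (midm X - mcomp (mcomp (mstar kappa) u) kappa))).
Proof.
split; last exact: part2.
split.
- case=> chi [h1 h3]; split; first by exists chi.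
  have [kphi kfac] := hker.
  have [a [ha _]] : exists! a : Mor C X K, mcomp a kappa = midm X - mcomp phi chi.
    by apply: kfac; rewrite compBl comp1m h1 subrr.
  have ka : mcomp kappa a = midm K.
    have [b [_ ub]] := kfac K kappa kphi.
    rewrite -(ub (midm K)); last by rewrite comp1m.
    apply/esym/ub.
    by rewrite -Defs.compA ha compBr compm1 Defs.compA kphi comp0l subr0.
  have sa : mcomp (mstar kappa) (mstar a) = mcomp a kappa.
    by rewrite -star_comp ha starB star1 h3.
  have ak : mcomp (mstar a) (mstar kappa) = midm K by rewrite -star_comp ka star1.
  exists (mcomp (mstar a) a); split.
  + by rewrite Defs.compA -(Defs.compA kappa (mstar kappa)) sa Defs.compA ka comp1m ka.
  + rewrite -Defs.compA (Defs.compA a) -sa !Defs.compA ak comp1m.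
    exact: ak.
- case=> [[psi hpsi] [u hu]].
  exact (ex_intro _ _ (@part2 C X Y K phi kappa hker u hu psi hpsi)). Qed.
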